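(* Given a critical tuple $(\mathrm{Block},\mathrm{Gd},\mathrm{Bd})$ as input, the Gap algorithm returns an independent set $P\subseteq\mathcal{U}\setminus F$ such that $$\mathrm{OPT}(P)\ \ge\ \sum_{j\in\mathcal{B}}2^j\Big(\mathrm{uncov}\big(B_F(\mathrm{Bd}(j))\cup B_{\mathcal{U}\setminus F}(\mathrm{Block}(j)\setminus\{j\}),\,B_{\mathcal{U}\setminus F}(j)\big)-\mathrm{indep}\big(B_F(\mathrm{Gd}(j)),\,B_{\mathcal{U}\setminus F}(j)\big)\Big),$$ where $\mathcal{B}=\{i\in\mathbb{Z}:\mathrm{Block}(i)\neq\emptyset\}$.
   Context: $M=(\mathcal{U},\mathcal{I})$ is a matroid; $\mathrm{rank}(X)=\max\{|X'|:X'\subseteq X,X'\in\mathcal{I}\}$, $\mathrm{span}(X)=\{e:\mathrm{rank}(X\cup\{e\})=\mathrm{rank}(X)\}$, $\mathrm{OPT}(X)=\max\{\sum_{e\in X'}\mathrm{val}(e):X'\subseteq X,X'\in\mathcal{I}\}$, $\mathrm{uncov}(R,S)=\mathrm{rank}(R\cup S)-\mathrm{rank}(R)$, $\mathrm{indep}(R,S)=\mathrm{rank}(S\setminus\mathrm{span}(R))$. Standing assumption: elements of rank $0$ have value $0$ and every element of positive value has value $2^i$ for some $i\in\mathbb{Z}$. For $X\subseteq\mathcal{U}$: $B_X(i)=\{e\in X:\mathrm{val}(e)=2^i\}$, $B_X(I)=\bigcup_{i\in I}B_X(i)$. Logarithms base 2. $F\subseteq\mathcal{U}$ is the set of elements revealed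 in a first (observation) stage; afterwards the elements of $\mathcal{U}\setminus F$ are revealed one by one. Critical tuple: $(\mathrm{Block},\mathrm{Gd},\mathrm{Bd})$ where $\mathrm{Block},\mathrm{Gd},\mathrm{Bd}$ are maps from $\mathbb{Z}$ to subsets of $\mathbb{Z}$ such that for all $i\ge j$ with $\mathrm{Block}(i),\mathrm{Block}(j)$ nonempty: (1) $i\in\mathrm{Block}(i)$; (2) if $i>j$ then either $\mathrm{Block}(i)=\mathrm{Block}(j)$ or $\min\mathrm{Block}(i)>\max\mathrm{Block}(j)$; (3) if $\mathrm{Block}(i)=\mathrm{Block}(j)$ then $\mathrm{Gd}(i)=\mathrm{Gd}(j)$ and $\mathrm{Bd}(i)=\mathrm{Bd}(j)$; (4) $\mathrm{Block}(i)\cup\mathrm{Bd}(i)\subseteq\mathrm{Gd}(i)$; (5) if $\min\mathrm{Block}(i)>\max\mathrm{Block}(j)$ then $\mathrm{Bd}(i)\subseteq\mathrm{Gd}(i)\subseteq\mathrm{Bd}(j)\subseteq\mathrm{Gd}(j)$; (6) $\max\mathrm{Block}(i)<\min\mathrm{Bd}(i)$. Gap algorithm with input a critical tuple: start with $P=\emptyset$; immediately after each $e\in\mathcal{U}\setminus F$ is revealed (elements of value $0$ are ignored), let $\ell=\log\mathrm{val}(e)$; if $\mathrm{Block}(\ell)\neq\emptyset$, $e\in\mathrm{span}(B_F(\mathrm{Gd}(\ell)))$ and $e\notin\mathrm{span}(P\cup B_F(\mathrm{Bd}(\ell)))$, then add $e$ to $P$. Output $P$. *)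

(* Defs.v *)
From HB Require Import structures.
From mathcomp Require Import all_boot all_order all_algebra.
From mathcomp Require Import boolp classical_sets fsbigop.
Set Implicit Arguments. Unset Strict Implicit. Unset Printing Implicit Defensive.
Import Order.TTheory GRing.Theory Num.Theory.
Local Open Scope ring_scope.
Local Open Scope classical_set_scope.

Section Matroid.
Variable T : finType.
Variable indep : {set T} -> bool.

Definition is_matroid : Prop :=
  [/\ indep (@finset.set0 T),
      (forall A B : {set T}, A \subset B -> indep B -> indep A) &
      (forall A B : {set T}, indep A -> indep B -> #|A| < #|B| ->
         exists2 x, x \in B :\: A & indep (x |: A))]%N.

Definition rank (X : {set T}) : nat :=
  \max_(Y : {set T} | (Y \subset X) && indep Y) #|Y|.

Definition span (X : {set T}) : {set T} :=
  [set e | rank (e |: X) == rank X].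

Definition uncov (Rs S : {set T}) : nat := (rank (Rs :|: S) - rank Rs)%N.

Definition indep_of (Rs S : {set T}) : nat := rank (S :\: span Rs).

Variable R : realFieldType.
Variable val : T -> R.

Definition OPT (X : {set T}) : R :=
  \big[Num.max/0]_(Y : {set T} | (Y \subset X) && indep Y) \sum_(e in Y) val e.

Definition Bset (X : {set T}) (I : set int) : {set T} :=
  [set e in X | `[< exists2 i, I i & val e = (2:R) ^ i >] ].

Definition Bset1 (X : {set T}) (i : int) : {set T} := Bset X [set i].

End Matroid.

(* Critical tuple; "min A > max B" is read as: every element of A exceeds every
   element of B (vacuous for empty sets). *)
Definition critical_tuple (Block Gd Bd : int -> set int) : Prop :=
  forall i j : int, (j <= i)%R -> Block i !=set0 -> Block j !=set0 ->
    [/\ Block i i,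
        ((j < i)%R -> Block i = Block j \/
            (forall a b, Block i a -> Block j b -> (b < a)%R)),
        (Block i = Block j -> Gd i = Gd j /\ Bd i = Bd j),
        (setU (Block i) (Bd i) `<=` Gd i) &
        (((forall a b, Block i a -> Block j b -> (b < a)%R) ->
            [/\ Bd i `<=` Gd i, Gd i `<=` Bd j & Bd j `<=` Gd j]) /\
         (forall a b, Block i a -> Bd i b -> (a < b)%R))].

Section Gap.
Variables (T : finType) (indep : {set T} -> bool) (R : realFieldType) (val : T -> R).
Variables (F : {set T}) (Block Gd Bd : int -> set int).

(* one step of the Gap algorithm upon revelation of e; elements of value 0
   have no level l with val e = 2^l and are thus ignored *)
Definition gap_step (P : {set T}) (e : T) : {set T} :=
  if `[< exists l : int, [/\ val e = (2:R) ^ l, Block l !=set0,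
          e \in span indep (Bset val F (Gd l)) &
          e \notin span indep (P :|: Bset val F (Bd l))] >]
  then e |: P else P.

Definition gap (s : seq T) : {set T} := foldl gap_step (@finset.set0 T) s.

End Gap.

(* Main.v *)
Require Import Defs.
From HB Require Import structures.
From mathcomp Require Import all_boot all_order all_algebra.
Import Order.TTheory GRing.Theory Num.Theory.
Set Implicit Arguments. Unset Strict Implicit.
Local Open Scope ring_scope.

Section Mat.
Variables (T : finType) (indep : {set T} -> bool).
Hypothesis hM : is_matroid indep.
Local Notation r := (rank indep).
Local Notation sp := (Defs.span indep).

Lemma rank_ge (Y X : {set T}) : Y \subset X -> indep Y -> (#|Y| <= r X)%N.
Proof. move=> YX iY; rewrite /rank; apply: (@leq_bigmax_cond _ (fun Z : {set T} => (Z \subset X) && indep Z) (fun Z => #|Z|) Y); by rewrite YX iY. Qed.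

Lemma indep0 : indep set0.
Proof. by case: hM. Qed.

Lemma rank_wit (X : {set T}) : exists2 Y : {set T}, (Y \subset X) && indep Y & #|Y| = r X.
Proof.
have P0 : (set0 \subset X) && indep set0 by rewrite sub0set indep0.
case: (@arg_maxnP _ set0 (fun Z : {set T} => (Z \subset X) && indep Z) (fun Z : {set T} => #|Z|) P0) => Y PY maxY.
exists Y => //; apply/eqP; rewrite eqn_leq; apply/andP; split.
  by case/andP: PY => ??; apply: rank_ge.
by apply/bigmax_leqP => Z PZ; apply: maxY.
Qed.

Lemma rank_le_card (X : {set T}) : (r X <= #|X|)%N.
Proof. by apply/bigmax_leqP => Z /andP[ZX _]; apply: subset_leq_card. Qed.

Lemma rank0 : r set0 = 0%N.
Proof. by apply/eqP; rewrite -leqn0 -(cards0 T) rank_le_card. Qed.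

Lemma rank_mono (X Y : {set T}) : X \subset Y -> (r X <= r Y)%N.
Proof.
move=> XY; apply/bigmax_leqP => Z /andP[ZX iZ]; apply: rank_ge => //.
exact: subset_trans ZX XY.
Qed.

Lemma rank_indep (X : {set T}) : indep X -> r X = #|X|.
Proof. by move=> iX; apply/eqP; rewrite eqn_leq rank_le_card rank_ge. Qed.

Lemma extend (I Z : {set T}) : I \subset Z -> indep I ->
  exists J : {set T}, [/\ I \subset J, J \subset Z, indep J & #|J| = r Z].
Proof.
move=> IZ iI.
have P0 : [&& I \subset I, I \subset Z & indep I] by rewrite subxx IZ iI.
case: (@arg_maxnP _ I (fun J : {set T} => [&& I \subset J, J \subset Z & indep J]) (fun J : {set T} => #|J|) P0) => J /and3P[IJ JZ iJ] maxJ.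
exists J; split => //; apply/eqP; rewrite eqn_leq rank_ge //=.
rewrite leqNgt; apply/negP => lt.
case: (rank_wit Z) => K /andP[KZ iK] cK.
case: hM => _ _ /(_ J K iJ iK); rewrite cK => /(_ lt) [x /setDP[xK xJ] ixJ].
have : [&& I \subset x |: J, x |: J \subset Z & indep (x |: J)].
  rewrite ixJ (subset_trans IJ (subsetUr _ _)) /= setUC subUset JZ sub1set.
  by rewrite (subsetP KZ).
move/maxJ; rewrite cardsU1 xJ /=; by rewrite ltnn.
Qed.

Lemma submod (A B : {set T}) : (r (A :|: B) + r (A :&: B) <= r A + r B)%N.
Proof.
case: (rank_wit (A :&: B)) => I /andP[IAB iI] cI.
have IU : I \subset A :|: B by apply: (subset_trans IAB); apply: (subset_trans (subsetIl _ _)); apply: subsetUl.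
have [J [IJ JAB iJ cJ]] := @extend I (A :|: B) IU iI.
have down : forall X Y : {set T}, X \subset Y -> indep Y -> indep X by case: hM.
have hA : (#|J :&: A| <= r A)%N by apply: rank_ge; [exact: subsetIr| exact: down (subsetIl _ _) iJ].
have hB : (#|J :&: B| <= r B)%N by apply: rank_ge; [exact: subsetIr| exact: down (subsetIl _ _) iJ].
have e1 : (J :&: A) :|: (J :&: B) = J by rewrite -setIUr; apply/setIidPl.
have e2 : (#|I| <= #|(J :&: A) :&: (J :&: B)|)%N.
  apply: subset_leq_card; rewrite setIACA setIid subsetI IJ.
  exact: (subset_trans IAB) .
have := cardsUI (J :&: A) (J :&: B); rewrite e1 => e3.
rewrite -cJ -cI; apply: leq_trans (leq_add hA hB); rewrite -e3 leq_add2l //.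
Qed.

Lemma subadd (A B : {set T}) : (r (A :|: B) <= r A + r B)%N.
Proof. exact: leq_trans (leq_addr _ _) (submod A B). Qed.

Lemma rank_addc (X Y : {set T}) : (r (X :|: Y) <= r X + #|Y|)%N.
Proof. by apply: leq_trans (subadd X Y) _; rewrite leq_add2l rank_le_card. Qed.

Lemma rank_add1 (X : {set T}) e : (r (e |: X) <= (r X).+1)%N.
Proof. by rewrite setUC; apply: leq_trans (rank_addc X [set e]) _; rewrite cards1 addn1. Qed.

Lemma in_span (X : {set T}) e : (e \in sp X) = (r (e |: X) == r X).
Proof. by rewrite inE. Qed.

Lemma span_sub (X : {set T}) : X \subset sp X.
Proof.
by apply/subsetP => e eX; rewrite in_span; have -> : e |: X = X by apply/setUidPr; rewrite sub1set.
Qed.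

Lemma span_mono (X Z : {set T}) e : X \subset Z -> e \in sp X -> e \in sp Z.
Proof.
move=> XZ; rewrite !in_span => /eqP eX.
have := submod Z (e |: X).
have -> : Z :|: (e |: X) = e |: Z.
  by rewrite setUCA; congr (_ :|: _); apply/setUidPl.
move=> h; rewrite eqn_leq (@rank_mono Z (e |: Z) (subsetUr _ _)) andbT.
have : (r X <= r (Z :&: (e |: X)))%N by apply: rank_mono; rewrite subsetI XZ subsetUr.
move=> h2; rewrite eX in h.
have := leq_trans (leq_add (leqnn (r (e |: Z))) h2) h; by rewrite leq_add2r.
Qed.

Lemma rank_span (X Y : {set T}) : Y \subset sp X -> r (X :|: Y) = r X.
Proof.
move: {2}#|Y| (leqnn #|Y|) => n; elim: n Y => [|n IH] Y.
  by rewrite leqn0 cards_eq0 => /eqP -> _; rewrite setU0.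
case: (set_0Vmem Y) => [-> _ _|[y yY]]; first by rewrite setU0.
move=> cY YS.
have cY' : (#|Y :\ y| <= n)%N by rewrite -ltnS; apply: leq_trans cY; rewrite (cardsD1 y Y) yY.
have YS' : Y :\ y \subset sp X by apply: subset_trans YS; apply: subsetDl.
have IH' := IH _ cY' YS'.
have -> : X :|: Y = y |: (X :|: Y :\ y) by rewrite setUCA (setD1K yY).
have : y \in sp (X :|: Y :\ y) by exact: (@span_mono X _ y (subsetUl _ _) (subsetP YS y yY)).
by rewrite in_span => /eqP ->.
Qed.

Lemma span_trans (Y Z : {set T}) e : Y \subset sp Z -> e \in sp Y -> e \in sp Z.
Proof.
move=> YZ eY; rewrite in_span eqn_leq (@rank_mono Z (e |: Z) (subsetUr _ _)) andbT.
have h1 : e \in sp (Z :|: Y) by apply: (@span_mono Y (Z :|: Y) e _ eY); apply: subsetUr.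
move: h1; rewrite in_span (@rank_span Z Y YZ) => /eqP <-.
by apply: rank_mono; rewrite setUA subsetUl.
Qed.

Lemma notspan_rank (X : {set T}) e : e \notin sp X -> r (e |: X) = (r X).+1.
Proof.
rewrite in_span => h; apply/eqP; rewrite eqn_leq rank_add1 /=.
by rewrite ltn_neqAle eq_sym h rank_mono // subsetUr.
Qed.

Lemma indep_add (P : {set T}) e : indep P -> e \notin sp P -> indep (e |: P).
Proof.
move=> iP eP.
have eP' : e \notin P by apply: contra eP; apply: (subsetP (span_sub P)).
have := @notspan_rank P e eP; rewrite (@rank_indep P iP) => h.
case: (rank_wit (e |: P)) => Y /andP[YS iY] cY.
suff E : e |: P = Y by rewrite E.
apply/eqP; rewrite eq_sym eqEcard YS cY h cardsU1 eP' /=.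
by rewrite add1n.
Qed.

End Mat.

Unset Implicit Arguments.
From mathcomp Require Import boolp.
From mathcomp Require Import zify.

Section GapProof.
Variables (T : finType) (indep : {set T} -> bool) (R : realFieldType) (val : T -> R).
Variables (F : {set T}) (Block Gd Bd : int -> int -> Prop).
Hypothesis hM : is_matroid indep.
Hypothesis hcrit : critical_tuple Block Gd Bd.
Set Implicit Arguments. Unset Strict Implicit.
Local Notation r := (rank indep).
Local Notation sp := (Defs.span indep).
Local Notation BF := (Bset val F).
Local Notation P s := (gap indep val F Block Gd Bd s).

Definition lev (e : T) : int :=
  match pselect (exists i : int, val e = (2:R) ^ i) with
  | left h => projT1 (cid h)
  | right _ => 0
  end.

Lemma exp2_inj (i k : int) : (2:R) ^ i = (2:R) ^ k -> i = k.
Proof. by apply: ieexprIz; rewrite ?ltr0n // pnatr_eq1. Qed.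

Lemma levP e i : val e = (2:R) ^ i -> lev e = i.
Proof.
move=> h; rewrite /lev; case: pselect => [h'|[]]; last by exists i.
case: (cid h') => k /= hk; apply: exp2_inj; by rewrite -hk -h.
Qed.

Lemma mem_Bset (X : {set T}) (I : int -> Prop) e i :
  e \in X -> I i -> val e = (2:R) ^ i -> e \in Bset val X I.
Proof. by move=> eX Ii he; rewrite inE eX /=; apply/asboolP; exists i. Qed.

Lemma Bset_sub (X : {set T}) (I J : int -> Prop) :
  (forall i, I i -> J i) -> Bset val X I \subset Bset val X J.
Proof.
move=> IJ; apply/subsetP => e; rewrite !inE => /andP[-> /asboolP [i Ii hi]].
by apply/asboolP; exists i => //; apply: IJ.
Qed.

Lemma Bset_subX (X : {set T}) (I : int -> Prop) : Bset val X I \subset X.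
Proof. by apply/subsetP => e; rewrite inE => /andP[]. Qed.

Lemma Bset1P (X : {set T}) j e : e \in Bset1 val X j -> e \in X /\ val e = (2:R) ^ j.
Proof. by rewrite inE => /andP[-> /asboolP [i /= -> ->]]. Qed.

Section CT.
Variable j : int.
Hypothesis Bj : exists x, Block j x.

Definition lower (l : int) : Prop := forall a b, Block j a -> Block l b -> (b < a)%R.

Lemma Bd_Gd : forall x, Bd j x -> Gd j x.
Proof. by case: (hcrit j j (lexx j) Bj Bj) => _ _ _ c4 _ x hx; apply: c4; right. Qed.

Lemma Block_self l : (exists x, Block l x) -> Block l l.
Proof. by move=> Bl; case: (hcrit l l (lexx l) Bl Bl). Qed.

Lemma CT1 l : (exists x, Block l x) -> lower l -> forall x, Gd j x -> Bd l x.
Proof.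
move=> Bl low.
have lj : (l < j)%R by apply: low; apply: Block_self.
case: (hcrit j l (ltW lj) Bj Bl) => _ _ _ _ [c5 _].
by case: (c5 low).
Qed.

Lemma CT2 l : (exists x, Block l x) -> ~ lower l ->
  (Block l = Block j /\ Gd l = Gd j) \/ (forall x, Gd l x -> Bd j x).
Proof.
move=> Bl nlow; case: (ltgtP l j) => [lj|jl|->]; last by left.
- case: (hcrit j l (ltW lj) Bj Bl) => _ c2 c3 _ _.
  case: (c2 lj) => [E|sep]; last by case: (nlow sep).
  by left; split => //; case: (c3 E).
- case: (hcrit l j (ltW jl) Bl Bj) => _ c2 c3 _ [c5 _].
  case: (c2 jl) => [E|sep]; first by left; split => //; case: (c3 E).
  by right; case: (c5 sep).
Qed.

Lemma CT2' l : (exists x, Block l x) -> ~ lower l -> forall x, Gd l x -> Gd j x.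
Proof.
move=> Bl nlow x; case: (@CT2 l Bl nlow) => [[_ ->]//|h] /h; exact: Bd_Gd.
Qed.

End CT.

Definition goodP (Q : {set T}) (s : seq T) :=
  [/\ indep Q, forall p, p \in Q -> p \in s &
      forall p, p \in Q -> [/\ val p = (2:R) ^ lev p, exists x, Block (lev p) x &
                              p \in sp (BF (Gd (lev p)))]].

Lemma gap_rcons s e : P (rcons s e) = gap_step indep val F Block Gd Bd (P s) e.
Proof. by rewrite /gap foldl_rcons. Qed.

Lemma gap_stepP (Q : {set T}) e :
  (gap_step indep val F Block Gd Bd Q e = Q /\
    ~ (exists l : int, [/\ val e = (2:R) ^ l, exists x, Block l x,
          e \in sp (BF (Gd l)) & e \notin sp (Q :|: BF (Bd l))]))
  \/ (exists l : int, [/\ gap_step indep val F Block Gd Bd Q e = e |: Q,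
        val e = (2:R) ^ l, exists x, Block l x,
          e \in sp (BF (Gd l)) & e \notin sp (Q :|: BF (Bd l))]).
Proof.
rewrite /gap_step; case: asboolP => [[l [h1 h2 h3 h4]]|hn]; last by left.
by right; exists l.
Qed.


Lemma gap_good s : goodP (P s) s.
Proof.
elim/last_ind: s => [|s e [iP Ps Pl]].
  rewrite /goodP /gap /=; split => [|p|p]; rewrite ?inE //; exact: indep0.
rewrite gap_rcons; case: (gap_stepP (P s) e) => [[-> _]|[l [-> h1 h2 h3 h4]]].
  split => // p /Ps; by rewrite mem_rcons in_cons orbC => ->.
have eP : e \notin sp (P s) by apply: contra h4; apply: (span_mono hM (subsetUl _ _)).
split.
- exact: (indep_add hM iP eP).
- by move=> p; rewrite in_setU1 mem_rcons in_cons => /orP[->|/Ps ->]; rewrite ?orbT.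
- move=> p; rewrite in_setU1 => /orP[/eqP ->|/Pl //].
  by rewrite (levP h1).
Qed.


Section J.
Variable j : int.
Hypothesis Bj : exists x, Block j x.
Local Notation G := (BF (Gd j)).
Local Notation D := (BF (Bd j)).

Definition Lset (Q : {set T}) := [set p in Q | `[< lower j (lev p) >]].

Lemma gap_inv_j s :
  r (G :|: P s) = (r G + #|Lset (P s)|)%N /\
  (forall a, a \in s -> val a = (2:R) ^ j -> a \in sp G -> a \in sp (P s :|: D)).
Proof.
elim/last_ind: s => [|s e [IHr IHs]].
  rewrite /gap /=; split => //.
  have -> : Lset set0 = set0 by apply/setP => x; rewrite !inE.
  by rewrite setU0 cards0 addn0.
have [iP Ps Pl] := gap_good s.
rewrite gap_rcons; case: (gap_stepP (P s) e) => [[-> hn]|[l [-> h1 h2 h3 h4]]].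
  split => // a; rewrite mem_rcons in_cons => /orP[/eqP ->|aS] ha hG; last exact: IHs.
  apply/negPn/negP => hnot; apply: hn; exists j; split => //.
have eP : e \notin P s.
  apply: contra h4 => eP; apply: (subsetP (span_sub indep (P s :|: BF (Bd l)))).
  by rewrite in_setU eP.
split; last first.
  move=> a; rewrite mem_rcons in_cons => /orP[/eqP ->|aS] ha hG.
    by apply: (subsetP (span_sub indep ((e |: P s) :|: D))); rewrite in_setU in_setU1 eqxx.
  apply: (span_mono hM _ (IHs a aS ha hG)).
  by apply: setSU; apply: subsetUr.
case: (pselect (lower j l)) => low.
  have -> : Lset (e |: P s) = e |: Lset (P s).
    apply/setP => x; rewrite !inE; case: (eqVneq x e) => [->|] //=.
    by rewrite (levP h1); apply/asboolP.
  rewrite cardsU1 inE (negbTE eP) /= setUCA.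
  rewrite (notspan_rank hM) ?IHr; first by rewrite add1n addnS.
  apply: contra h4; apply: (span_mono hM).
  rewrite setUC; apply: setUS.
  by apply: Bset_sub; apply: (CT1 Bj h2 low).
have -> : Lset (e |: P s) = Lset (P s).
  apply/setP => x; rewrite !inE; case: (eqVneq x e) => [->|] //=.
  rewrite (negbTE eP) /=; rewrite (levP h1); apply/negbTE/asboolP; exact: low.
rewrite setUCA.
have : e \in sp (G :|: P s).
  apply: (span_mono hM _ h3); apply: subset_trans (subsetUl _ _).
  by apply: Bset_sub; apply: (CT2' Bj h2 low).
by rewrite in_span => /eqP ->.
Qed.


Lemma level_bound s (X0 : int -> Prop) :
  (forall a, a \in ~: F -> a \in s) -> (forall a, a \in s -> a \in ~: F) ->
  (forall l, Block j l -> l <> j -> X0 l) ->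
  (uncov indep (D :|: Bset val (~: F) X0) (Bset1 val (~: F) j)
     <= #|[set p in P s | lev p == j]| + indep_of indep G (Bset1 val (~: F) j))%N.
Proof.
move=> hs1 hs2 hX.
have [iP Ps Pl] := gap_good s.
have [IHr IHs] := gap_inv_j s.
set X := D :|: Bset val (~: F) X0.
set U := Bset1 val (~: F) j.
set Pj := [set p in P s | lev p == j].
set L := Lset (P s).
set Q := P s :\: L.
have DG : D \subset G by apply: Bset_sub; apply: Bd_Gd.
have LP : L \subset P s by apply/subsetP => x; rewrite inE => /andP[].
have PQL : Q :|: L = P s.
  apply/setP => x; rewrite in_setU in_setD; case: (boolP (x \in L)) => xL; rewrite /= ?orbT ?orbF //.
  by rewrite (subsetP LP x xL).
have Qprop : forall q, q \in Q -> [/\ q \in P s, ~ lower j (lev q), val q = (2:R) ^ lev q,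
     exists x, Block (lev q) x & q \in sp (BF (Gd (lev q)))].
  move=> q; rewrite in_setD => /andP[qL qP].
  have [hv hB hsp] := Pl q qP.
  split => // low; move: qL; rewrite inE qP /=; move/negP; apply; exact/asboolP.
have QG : Q \subset sp G.
  apply/subsetP => q /Qprop [qP nlow hv hB hsp].
  apply: (span_mono hM _ hsp); apply: Bset_sub; exact: (CT2' Bj hB nlow).
have hA : forall a, a \in U -> a \in sp G -> a \in sp (Q :|: D).
  move=> a aU aG.
  have [aF av] := Bset1P aU.
  have aPD := IHs a (hs1 a aF) av aG.
  have h := submod hM (G :|: (Q :|: [set a])) ((P s :|: D) :|: [set a]).
  have e1 : (r (G :|: P s) <= r ((G :|: (Q :|: [set a])) :|: ((P s :|: D) :|: [set a])))%N.
    apply: rank_mono; rewrite subUset; apply/andP; split.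
      by apply: subset_trans (subsetUl _ _); apply: subsetUl.
    apply: subset_trans (subsetUr _ _).
    by apply: subset_trans (subsetUl _ _); apply: subsetUl.
  have e2 : (r ((Q :|: D) :|: [set a]) <= r ((G :|: (Q :|: [set a])) :&: ((P s :|: D) :|: [set a])))%N.
    apply: rank_mono; rewrite subsetI; apply/andP; split.
      rewrite -setUA (setUC D) setUA; rewrite -(setUC (Q :|: [set a])) setUS //.
    apply: setSU; apply: setUSS => //; rewrite -PQL; exact: subsetUl.
  have e3 : r (G :|: (Q :|: [set a])) = r G.
    by apply: (rank_span hM); rewrite subUset QG sub1set.
  have e4 : r ((P s :|: D) :|: [set a]) = r (P s :|: D).
    by apply: (rank_span hM); rewrite sub1set.
  have e5 : (r (P s :|: D) <= r (Q :|: D) + #|L|)%N.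
    by rewrite -PQL setUAC; apply: rank_addc hM _ _.
  have fin : (r ((Q :|: D) :|: [set a]) <= r (Q :|: D))%N.
    have := leq_trans (leq_add e1 e2) h; rewrite e3 e4 IHr => h'.
    have := leq_trans h' (leq_add (leqnn (r G)) e5).
    by rewrite -addnA leq_add2l (addnC (r _)) leq_add2l.
  rewrite in_span eqn_leq (setUC [set a]) fin /=; apply: rank_mono; exact: subsetUl.
have QDsp : Q :|: D \subset sp (X :|: Pj).
  have XS : X \subset sp (X :|: Pj) by apply: subset_trans (span_sub indep _); apply: subsetUl.
  rewrite subUset; apply/andP; split; last by apply: subset_trans XS; apply: subsetUl.
  apply/subsetP => q qQ; have [qP nlow hv hB hsp] := Qprop q qQ.
  case: (eqVneq (lev q) j) => lj.
    apply: (subsetP (span_sub indep _)); rewrite in_setU; apply/orP; right.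
    by rewrite /Pj inE qP lj eqxx.
  case: (CT2 Bj hB nlow) => [[E _]|hGd].
    have Bjl : Block j (lev q) by rewrite -E; apply: Block_self.
    apply: (subsetP XS); rewrite in_setU; apply/orP; right.
    apply: (mem_Bset (hs2 q (Ps q qP)) _ hv); apply: (hX _ Bjl); exact/eqP.
  apply: (span_mono hM _ hsp); apply: subset_trans (subsetUl _ _).
  apply: subset_trans (subsetUl _ _); exact: Bset_sub.
have AX : U :&: sp G \subset sp (X :|: Pj).
  apply/subsetP => a; rewrite in_setI => /andP[aU aG].
  exact: (span_trans hM QDsp (hA a aU aG)).
rewrite /uncov /indep_of.
have f1 : (r (X :|: U) <= r ((X :|: Pj) :|: (U :&: sp G)) + r (U :\: sp G))%N.
  apply: leq_trans (subadd hM _ _); apply: rank_mono.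
  rewrite -{1}(setID U (sp G)) setUA; apply: setSU; apply: setSU; exact: subsetUl.
have f2 : r ((X :|: Pj) :|: (U :&: sp G)) = r (X :|: Pj) by exact: (rank_span hM AX).
have f3 : (r (X :|: Pj) <= r X + #|Pj|)%N by exact: (rank_addc hM _ _).
lia.
Qed.

End J.

End GapProof.

Unset Implicit Arguments.
From HB Require Import structures.
From mathcomp Require Import all_boot all_order all_algebra.
From mathcomp Require Import boolp classical_sets fsbigop.
Import Order.TTheory GRing.Theory Num.Theory.
Local Open Scope ring_scope.
Local Open Scope classical_set_scope.

Theorem theorem2 (T : finType) (indep : {set T} -> bool) (R : realFieldType)
  (val : T -> R) (F : {set T}) (Block Gd Bd : int -> set int) (s : seq T) :
  is_matroid indep ->
  (forall e, 0 <= val e) ->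
  (forall e, rank indep [set e] = 0%N -> val e = 0) ->
  (forall e, 0 < val e -> exists i : int, val e = (2:R) ^ i) ->
  critical_tuple Block Gd Bd ->
  perm_eq s (enum (~: F)) ->
  let P := gap indep val F Block Gd Bd s in
  [/\ indep P, P \subset ~: F &
      OPT indep val P >=
      \sum_(j \in [set i : int | Block i !=set0])
        (2:R) ^ j *
        ((uncov indep (Bset val F (Bd j) :|: Bset val (~: F) (Block j `\ j))
                      (Bset1 val (~: F) j))%:R
         - (indep_of indep (Bset val F (Gd j)) (Bset1 val (~: F) j))%:R)].
Proof.
move=> hM hv0 hloop hpow hcrit hperm P.
have hs1 : forall a, a \in ~: F -> a \in s by move=> a; rewrite (perm_mem hperm) mem_enum.
have hs2 : forall a, a \in s -> a \in ~: F by move=> a; rewrite (perm_mem hperm) mem_enum.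
have [iP Ps Pl] := gap_good val F Block Gd Bd hM s.
split => //.
  by apply/fintype.subsetP => p /Ps; apply: hs2.
have hOPT : \sum_(e in P) val e <= OPT indep val P.
  rewrite /OPT; apply: (@le_bigmax_cond _ R _ 0 P (fun Y => (Y \subset P) && indep Y) (fun Y => \sum_(e in Y) val e)).
  by rewrite subxx iP.
apply: le_trans hOPT.
set rs := [seq i <- undup [seq lev val e | e <- enum T] | `[< Block i !=set0 >]].
have urs : uniq rs by rewrite filter_uniq // undup_uniq.
have rsA : [set` rs] `<=` [set i : int | Block i !=set0].
  by move=> i /=; rewrite mem_filter => /andP[/asboolP h _].
have lev_in : forall e, (exists x, Block (lev val e) x) -> lev val e \in rs.
  move=> e h; rewrite mem_filter; apply/andP; split; first by apply/asboolP.
  by rewrite mem_undup; apply: map_f; rewrite mem_enum.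
rewrite (fsbigE rs) //; last first.
  move=> i Bi nrs.
  have U0 : Bset1 val (~: F) i = finset.set0.
    apply/eqP; rewrite -finset.subset0; apply/fintype.subsetP => e /Bset1P [_ he].
    exfalso; apply: (negP nrs); rewrite -(levP he); apply: lev_in.
    by rewrite (levP he).
  by rewrite U0 /uncov /indep_of finset.setU0 finset.set0D (rank0 indep) subnn subrr mulr0.
apply: (@le_trans _ _ (\sum_(i <- rs) (2:R) ^ i * (#|[set p in P | lev val p == i]|)%:R)).
  rewrite big_mkcond /=; apply: ler_sum => i _; case: ifP => iA.
    have Bi : exists x, Block i x by move/set_mem: iA.
    have hb := level_bound (s := s) (X0 := Block i `\ i) val hM hcrit Bi hs1 hs2 (fun l h1 h2 => conj h1 h2).
    rewrite ler_wpM2l ?exprz_ge0 //.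
    by rewrite lerBlDr -natrD ler_nat.
  by rewrite mulr_ge0 ?exprz_ge0 ?ler0n.
have inner : forall e, e \in P -> val e = \sum_(i <- rs) (2:R) ^ i * (lev val e == i)%:R.
  move=> e eP; have [hv hB _] := Pl e eP.
  rewrite (bigD1_seq (lev val e)) //=; last exact: lev_in hB.
  rewrite eqxx mulr1 big1 ?addr0 // => i ne.
  by rewrite eq_sym (negbTE ne) mulr0.
rewrite [X in _ <= X](eq_bigr _ inner) exchange_big /=.
apply: ler_sum => i _.
rewrite -mulr_sumr ler_wpM2l ?exprz_ge0 //.
rewrite -natr_sum ler_nat; apply: eq_leq.
rewrite -sum1_card [RHS]big_mkcond [LHS]big_mkcond /=.
apply: eq_bigr => e _; rewrite inE; case: (e \in P) => //=.
Qed.
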